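(* Let $(\Omega,\mathcal{F},\mathbb{P})$ be a probability space, let $X_{n,m}\colon\Omega\to[0,1]$, $n,m\in\mathbb{N}$, be i.i.d. random variables that are continuous uniformly distributed on $[0,1]$, let $f\colon\mathbb{R}^2\to\mathbb{R}$ be given by $f(\theta)=\int_0^1|\theta_2\max(\theta_1x,0)-\sin(x)|^2\,dx$ for $\theta=(\theta_1,\theta_2)\in\mathbb{R}^2$, let $F\colon\mathbb{R}^2\times[0,1]\to\mathbb{R}$ be given by $F(\theta,x)=|\theta_2\max(\theta_1x,0)-\sin(x)|^2$, and let $\mathcal{M}=\{\theta\in\mathbb{R}^2\colon f(\theta)=\inf_{\vartheta\in\mathbb{R}^2}f(\vartheta)\}$. Then: $f(\theta)=\mathbb{E}[F(\theta,X_{1,1})]$ and $\mathbb{E}[|F(\theta,X_{1,1})|^2]<\infty$ for every $\theta\in\mathbb{R}^2$; for every $x\in[0,1]$ the map $\theta\mapsto F(\theta,x)$ is locally Lipschitz continuous; and there exists an open set $U\subseteq\mathbb{R}^2$ such that $f|_U$ is three times continuously differentiable, for every non-empty compact $\mathfrak{C}\subseteq U$ it holds that $\sup_{\theta\in\mathfrak{C}}\mathbb{E}[|F(\theta,X_{1,1})|^2+|(\nabla_\theta F)(\theta,X_{1,1})|^2]<\infty$, $\mathcal{M}\cap U$ is a non-empty $1$-dimensional $C^1$-submanifold of $\mathbb{R}^2$, and $\operatorname{rank}((\operatorname{Hess}f)(\theta))=1$ for every $\theta\in\mathcal{M}\cap U$.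
   Context: $\nabla_\theta F$ denotes the gradient of $F$ with respect to $\theta$. *)

(* Defs.v *)
From HB Require Import structures.
From mathcomp Require Import all_boot all_order all_algebra.
From mathcomp Require Import all_classical all_reals all_analysis.
Set Implicit Arguments. Unset Strict Implicit. Unset Printing Implicit Defensive.
Import Order.TTheory GRing.Theory Num.Theory.
Import numFieldNormedType.Exports.
Local Open Scope classical_set_scope.
Local Open Scope ring_scope.

Section defs.
Variable R : realType.

Definition lossF (theta : R * R) (x : R) : R :=
  (theta.2 * Num.max (theta.1 * x) 0 - sin x) ^+ 2.

Definition objf (theta : R * R) : R :=
  Rintegral lebesgue_measure `[0%R, 1%R] (lossF theta).

Definition partial1 (g : R * R -> R) (p : R * R) : R :=
  derive1 (fun t => g (t, p.2)) p.1.
Definition partial2 (g : R * R -> R) (p : R * R) : R :=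
  derive1 (fun t => g (p.1, t)) p.2.
Definition partial (i : 'I_2) (g : R * R -> R) : R * R -> R :=
  if val i == 0%N then partial1 g else partial2 g.

Fixpoint Ck (k : nat) (g : R * R -> R) (U : set (R * R)) : Prop :=
  {within U, continuous g} /\
  match k with
  | 0%N => True
  | k'.+1 =>
      (forall p, U p -> derivable (fun t => g (t, p.2)) p.1 1 /\
                        derivable (fun t => g (p.1, t)) p.2 1) /\
      Ck k' (partial1 g) U /\ Ck k' (partial2 g) U
  end.

Definition Ck2 (k : nat) (phi : R * R -> R * R) (U : set (R * R)) : Prop :=
  Ck k (fun p => (phi p).1) U /\ Ck k (fun p => (phi p).2) U.

Definition hessian (g : R * R -> R) (p : R * R) : 'M[R]_2 :=
  \matrix_(i < 2, j < 2) partial i (partial j g) p.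

Definition grad_sqnorm (g : R * R -> R) (p : R * R) : R :=
  partial1 g p ^+ 2 + partial2 g p ^+ 2.

Definition dist2 (a b : R * R) : R :=
  Num.sqrt ((a.1 - b.1) ^+ 2 + (a.2 - b.2) ^+ 2).

Definition locally_lipschitz (g : R * R -> R) : Prop :=
  forall p : R * R, exists2 e : R, 0 < e & exists L : R,
    forall a b, dist2 a p < e -> dist2 b p < e ->
      `|g a - g b| <= L * dist2 a b.

Definition C1_submanifold_dim1 (S : set (R * R)) : Prop :=
  forall p, S p ->
  exists (V W : set (R * R)) (phi psi : R * R -> R * R),
    [/\ (open V /\ V p /\ open W),
        (Ck2 1 phi V /\ Ck2 1 psi W),
        (forall q, V q -> W (phi q) /\ psi (phi q) = q),
        (forall w, W w -> V (psi w) /\ phi (psi w) = w) &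
        (forall q, V q -> (S q <-> (phi q).2 = 0))].

Definition mutually_independent d (T : measurableType d)
  (P : probability T R) (I : eqType) (X : I -> T -> R) : Prop :=
  forall (J : seq I) (A : I -> set R),
    uniq J -> (forall i, i \in J -> measurable (A i)) ->
    P (\bigcap_(i in [set i | i \in J]) (X i @^-1` A i)) =
    (\prod_(i <- J) P (X i @^-1` A i))%E.

End defs.

(* Main.v *)
Set Warnings "-notation-overridden -ambiguous-paths -notation-incompatible-prefix -deprecated".
Require Import Defs.
From HB Require Import structures.
From mathcomp Require Import all_boot all_order all_algebra.
From mathcomp Require Import all_classical all_reals all_analysis.
From mathcomp Require Import ring lra.
Import Order.TTheory GRing.Theory Num.Theory.
Import numFieldNormedType.Exports.
Local Open Scope classical_set_scope.
Local Open Scope ring_scope.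
Section P.
Variable R : realType.
Local Notation mu := (@lebesgue_measure R).

Lemma cint (f : R -> R) : continuous f -> mu.-integrable `[0, 1] (EFin \o f).
Proof.
move=> cf; apply: continuous_compact_integrable; first exact: segment_compact.
exact: continuous_subspaceT.
Qed.

Lemma cM {f g : R -> R} : continuous f -> continuous g -> continuous (fun x => f x * g x).
Proof. by move=> cf cg x; apply: continuousM; [exact: cf|exact: cg]. Qed.

Lemma cD {f g : R -> R} : continuous f -> continuous g -> continuous (fun x => f x + g x).
Proof. by move=> cf cg x; apply: continuousD; [exact: cf|exact: cg]. Qed.

Lemma c_id : continuous (fun x : R => x). Proof. by move=> x; exact: cvg_id. Qed.
Lemma c_cst (k : R) : continuous (fun x : R => k). Proof. by move=> x; exact: cvg_cst. Qed.

Lemma c_sq {f : R -> R} : continuous f -> continuous (fun x => f x ^+ 2).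
Proof.
move=> cf; have -> : (fun x => f x ^+ 2) = (fun x => f x * f x).
  by apply/funext => y; rewrite expr2.
exact: cM.
Qed.

Ltac ctac := apply: cint; repeat first [apply: cD | apply: cM | apply: c_sq | exact: c_id | exact: c_cst | exact: continuous_sin].

Definition aa := \int[mu]_(x in `[0, 1]) (x ^+ 2).
Definition bb := \int[mu]_(x in `[0, 1]) (x * sin x).
Definition cc := \int[mu]_(x in `[0, 1]) (sin x ^+ 2).

Lemma int_x2 : mu.-integrable `[0, 1] (EFin \o (fun x : R => x ^+ 2)).
Proof. exact/cint/c_sq/c_id. Qed.
Lemma int_xs : mu.-integrable `[0, 1] (EFin \o (fun x : R => x * sin x)).
Proof. apply: cint; exact: cM c_id (@continuous_sin R). Qed.
Lemma int_s2 : mu.-integrable `[0, 1] (EFin \o (fun x : R => sin x ^+ 2)).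
Proof. exact/cint/c_sq/continuous_sin. Qed.

Lemma objf_pos (th : R * R) : 0 <= th.1 ->
  objf th = (th.1 * th.2) ^+ 2 * aa - 2 * (th.1 * th.2) * bb + cc.
Proof.
move=> h1; rewrite /objf; set t := th.1 * th.2.
rewrite (@eq_Rintegral _ _ _ mu _ (fun x : R => (t ^+ 2 * x ^+ 2 + (- (2 * t)) * (x * sin x)) + sin x ^+ 2)).
  rewrite RintegralD //; try by ctac.
  rewrite RintegralD //; try by ctac.
  rewrite !RintegralZl //; try by ctac.
  by rewrite /aa /bb /cc; ring.
move=> x; rewrite inE /= in_itv /= => /andP[x0 x1].
rewrite /lossF max_l ?mulr_ge0 //.
rewrite /t; ring.
Qed.

Lemma objf_neg (th : R * R) : th.1 <= 0 -> objf th = cc.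
Proof.
move=> h1; rewrite /objf /cc; apply: eq_Rintegral => x.
rewrite inE /= in_itv /= => /andP[x0 x1].
by rewrite /lossF max_r ?mulr_le0_ge0 // mulr0 sub0r sqrrN.
Qed.
Lemma int_lb (f : R -> R) (m : R) : continuous f ->
  (forall x, 0 <= x <= 1 -> 0 <= f x) -> (forall x, 2^-1 <= x <= 1 -> m <= f x) ->
  m / 2 <= \int[mu]_(x in `[0, 1]) f x.
Proof.
move=> cf f0 fm.
rewrite (@itv_bndbnd_setU _ _ (BLeft (0:R)) (BLeft 2^-1) (BRight 1)); last 2 first.
- by rewrite bnd_simp; lra.
- by rewrite bnd_simp; lra.
rewrite Rintegral_setU //.
- have A : 0 <= \int[mu]_(x in `[0, 2^-1[) f x.
    apply: Rintegral_ge0 => x /=; rewrite in_itv /= => /andP[x0 x1]; apply: f0; apply/andP; split; lra.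
  suff H : m / 2 <= \int[mu]_(x in `[2^-1, 1]) f x.
    by apply: (le_trans H); exact: ler_wpDl.
  have B : \int[mu]_(x in `[2^-1, 1]) (cst m x) <= \int[mu]_(x in `[2^-1, 1]) f x.
    { apply: le_Rintegral => //; first last.
    all: try by move=> x /=; rewrite in_itv /=; exact: fm.
    all: apply: continuous_compact_integrable; first exact: segment_compact.
    all: apply: continuous_subspaceT => //; exact: c_cst. }
  have L : mu `[2^-1, 1] = (1 - 2^-1)%:E.
    rewrite (@lebesgue_measure_itv R (Interval (BLeft 2^-1) (BRight 1))) /= lte_fin.
    by have -> : (2^-1 < 1 :> R) by lra.
  move: B; rewrite Rintegral_cst //.
  rewrite (_ : fine _ = 2^-1) //.
  transitivity (fine ((1 - 2^-1 : R)%:E)); first exact: (congr1 fine L).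
  by rewrite /=; field.
- rewrite -itv_bndbnd_setU; last 2 first.
  + by rewrite bnd_simp; lra.
  + by rewrite bnd_simp; lra.
  exact: cint.
- apply/disj_setPS => x [/=]; rewrite !in_itv /= => /andP[_ h1] /andP[h2 _]; lra.
Qed.
Lemma aa_gt0 : 0 < aa.
Proof.
have H := @int_lb (fun x => x ^+ 2) (4^-1) (c_sq c_id) _ _.
rewrite /aa; apply: lt_le_trans (H _ _); first lra.
- by move=> x _; exact: sqr_ge0.
- move=> x /andP[x1 x2]; rewrite expr2; nra.
Qed.

Lemma sin_ge0_01 (x : R) : 0 <= x <= 1 -> 0 <= sin x.
Proof.
move=> /andP[x0 x1]; have [->|xp] := eqVneq x 0; first by rewrite sin0.
apply/ltW/sin2_gt0; apply/andP; split; [rewrite lt_neqAle eq_sym xp //| lra].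
Qed.

Lemma sin_mono_01 (x : R) : 2^-1 <= x <= 1 -> sin (2^-1) <= sin x.
Proof.
move=> /andP[x1 x2]; have hp := @pihalf_ge1 R.
rewrite leNgt ltr_sin ?in_itv /=; [rewrite -leNgt // | |];
  apply/andP; split; lra.
Qed.

Lemma bb_gt0 : 0 < bb.
Proof.
have s0 : 0 < sin (2^-1 : R) by apply: sin2_gt0; apply/andP; split; lra.
have H := @int_lb (fun x => x * sin x) (2^-1 * sin 2^-1) (cM c_id (@continuous_sin R)) _ _.
rewrite /bb; apply: lt_le_trans (H _ _).
- by apply: divr_gt0 => //; apply: mulr_gt0 => //; lra.
- move=> x /[dup] /andP[x0 x1] h; apply: mulr_ge0 => //; exact: sin_ge0_01.
- move=> x /[dup] /andP[x1 x2] h; apply: ler_pM; [lra|exact: ltW|done|exact: sin_mono_01].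
Qed.
Definition U : set (R * R) := [set p | 0 < p.1].

Lemma openU : open U.
Proof.
have -> : U = fst @^-1` [set x | 0 < x] by [].
apply: open_comp; last exact: open_gt.
by move=> p _; exact: cvg_fst.
Qed.

Lemma nearU p : U p -> \forall q \near p, U q.
Proof. by move=> Up; move: openU; rewrite openE => /(_ p Up). Qed.

Lemma near_pos (x : R) : 0 < x -> \forall t \near x, 0 < t.
Proof. by move=> x0; move: (@open_gt R 0); rewrite openE => /(_ x x0). Qed.

Inductive pf : (R * R -> R) -> Prop :=
| pf_cst c : pf (fun _ => c)
| pf_fst : pf (fun p => p.1)
| pf_snd : pf (fun p => p.2)
| pf_inv : pf (fun p => p.1^-1)
| pf_add f g : pf f -> pf g -> pf (fun p => f p + g p)
| pf_mul f g : pf f -> pf g -> pf (fun p => f p * g p).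

Lemma pf_cont h : pf h -> forall p, U p -> {for p, continuous h}.
Proof.
elim => [c| | | |f g _ IHf _ IHg|f g _ IHf _ IHg] p Up.
- exact: cvg_cst.
- exact: cvg_fst.
- exact: cvg_snd.
- apply: (@continuousV _ _ (fun p : R * R => p.1)); [exact: (negbT (gt_eqF Up))| exact: cvg_fst].
- apply: continuousD; [exact: IHf|exact: IHg].
- apply: continuousM; [exact: IHf|exact: IHg].
Qed.

Definition ider1 (f f1 : R * R -> R) := forall p, U p -> is_derive p.1 (1:R) (fun t => f (t, p.2)) (f1 p).
Definition ider2 (f f2 : R * R -> R) := forall p, U p -> is_derive p.2 (1:R) (fun t => f (p.1, t)) (f2 p).

Lemma ider_eq (x v : R) (f : R -> R) a b : is_derive x v f a -> a = b -> is_derive x v f b.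
Proof. by move=> H <-. Qed.

Lemma pf_der1 h : pf h -> exists2 f1, pf f1 & ider1 h f1.
Proof.
elim => [c| | | |f g _ [f1 pf1 d1] _ [g1 pg1 e1]|f g pf [f1 pf1 d1] pg [g1 pg1 e1]].
- exists (fun _ => 0); first exact: pf_cst.
  by move=> p Up; exact: is_derive_cst.
- exists (fun _ => 1); first exact: pf_cst.
  by move=> p Up; exact: is_derive_id.
- exists (fun _ => 0); first exact: pf_cst.
  by move=> p Up; exact: is_derive_cst.
- exists (fun p => (-1) * (p.1^-1 * p.1^-1)).
    by apply: pf_mul; [exact: pf_cst | apply: pf_mul; exact: pf_inv].
  move=> [x y] /= Ux; apply: ider_eq.
    exact: (@is_deriveV R id x 1 1 (negbT (gt_eqF Ux)) (is_derive_id _ _)).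
  by rewrite /= expr2 invfM; rewrite /GRing.scale /=; ring.
- exists (fun p => f1 p + g1 p); first exact: pf_add.
  by move=> p Up; exact: is_deriveD (d1 p Up) (e1 p Up).
- exists (fun p => f p * g1 p + g p * f1 p).
    by apply: pf_add; apply: pf_mul.
  move=> [x y] Up; apply: ider_eq.
    exact: is_deriveM (d1 _ Up) (e1 _ Up).
  by [].
Qed.

Lemma pf_der2 h : pf h -> exists2 f2, pf f2 & ider2 h f2.
Proof.
elim => [c| | | |f g _ [f1 pf1 d1] _ [g1 pg1 e1]|f g pf [f1 pf1 d1] pg [g1 pg1 e1]].
- exists (fun _ => 0); first exact: pf_cst.
  by move=> p Up; exact: is_derive_cst.
- exists (fun _ => 0); first exact: pf_cst.
  by move=> p Up; exact: is_derive_cst.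
- exists (fun _ => 1); first exact: pf_cst.
  by move=> p Up; exact: is_derive_id.
- exists (fun _ => 0); first exact: pf_cst.
  by move=> p Up; exact: (@is_derive_cst R R R (p.1^-1) p.2 1).
- exists (fun p => f1 p + g1 p); first exact: pf_add.
  by move=> p Up; exact: is_deriveD (d1 p Up) (e1 p Up).
- exists (fun p => f p * g1 p + g p * f1 p).
    by apply: pf_add; apply: pf_mul.
  move=> [x y] Up; apply: ider_eq.
    exact: is_deriveM (d1 _ Up) (e1 _ Up).
  by [].
Qed.
Lemma near1 (g h : R * R -> R) p : (forall q, U q -> g q = h q) -> U p ->
  {near p.1, (fun t => h (t, p.2)) =1 (fun t => g (t, p.2))}.
Proof.
move=> gh Up; near=> t; rewrite gh //; near: t; exact: near_pos.
Unshelve. all: by end_near. Qed.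

Lemma near2 (g h : R * R -> R) p : (forall q, U q -> g q = h q) -> U p ->
  {near p.2, (fun t => h (p.1, t)) =1 (fun t => g (p.1, t))}.
Proof.
by move=> gh Up; near=> t; rewrite gh.
Unshelve. all: by end_near. Qed.

Lemma cont_ext (g h : R * R -> R) : (forall q, U q -> g q = h q) ->
  {within U, continuous h} -> {within U, continuous g}.
Proof.
move=> gh; rewrite !continuous_open_subspace; try exact: openU.
move=> ch p; rewrite inE => Up.
have hp := ch p (mem_set Up).
have E : {near p, h =1 g}.
  by near=> q; rewrite gh //; near: q; exact: nearU.
rewrite /continuous_at (gh p Up).
apply: cvg_trans _ hp; exact: near_eq_cvg E.
Unshelve. all: by end_near. Qed.

Lemma Ck_ext k : forall g h, (forall q, U q -> g q = h q) -> Ck k h U -> Ck k g U.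
Proof.
elim: k => [|k IH] g h gh /=.
  by case=> ch _; split => //; exact: cont_ext ch.
case=> ch [dh [c1 c2]]; split; first exact: cont_ext ch.
split.
  move=> p Up; have [d1 d2] := dh p Up; split.
  - exact: near_eq_derivable (near1 _ _ _ gh Up) d1.
  - exact: near_eq_derivable (near2 _ _ _ gh Up) d2.
split.
- apply: IH c1 => p Up; rewrite /partial1 !derive1E.
  by apply/esym/near_eq_derive; exact: near1 _ _ _ gh Up.
- apply: IH c2 => p Up; rewrite /partial2 !derive1E.
  by apply/esym/near_eq_derive; exact: near2 _ _ _ gh Up.
Qed.

Lemma pf_Ck k : forall f, pf f -> Ck k f U.
Proof.
have C f : pf f -> {within U, continuous f}.
  move=> pff; rewrite continuous_open_subspace; last exact: openU.
  by move=> p; rewrite inE => Up; exact: pf_cont.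
elim: k => [|k IH] f pff /=; first by split => //; exact: C.
have [f1 p1 d1] := pf_der1 _ pff; have [f2 p2 d2] := pf_der2 _ pff.
split; first exact: C.
split.
  by move=> p Up; split; [exact: (@ex_derive _ _ _ _ _ _ _ (d1 p Up))|exact: (@ex_derive _ _ _ _ _ _ _ (d2 p Up))].
split.
- apply: (@Ck_ext _ _ f1); last exact: IH.
  by move=> p Up; rewrite /partial1 derive1E; exact: (@derive_val _ _ _ _ _ _ _ (d1 p Up)).
- apply: (@Ck_ext _ _ f2); last exact: IH.
  by move=> p Up; rewrite /partial2 derive1E; exact: (@derive_val _ _ _ _ _ _ _ (d2 p Up)).
Qed.
Lemma iD (f g : R -> R) x v df dg : is_derive x v f df -> is_derive x v g dg ->
  is_derive x v (fun t => f t + g t) (df + dg).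
Proof. move=> H1 H2; exact: is_deriveD. Qed.
Lemma iM (f g : R -> R) x v df dg : is_derive x v f df -> is_derive x v g dg ->
  is_derive x v (fun t => f t * g t) (f x * dg + g x * df).
Proof. move=> H1 H2; exact: is_deriveM. Qed.
Lemma iC (c x v : R) : is_derive x v (fun _ => c) 0.
Proof. exact: is_derive_cst. Qed.
Lemma iI (x v : R) : is_derive x v (fun t => t) v.
Proof. exact: is_derive_id. Qed.

Lemma dquad (a b c x : R) :
  derive1 (fun t : R => a * (t * t) + b * t + c) x = 2 * a * x + b.
Proof. by rewrite derive1E derive_val /GRing.scale /=; ring. Qed.

Lemma pq1 (g : R * R -> R) (x y a b c : R) : (forall t, g (t, y) = a * (t * t) + b * t + c) ->
  partial1 g (x, y) = 2 * a * x + b.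
Proof.
move=> E; rewrite /partial1 /=.
have -> : (fun t => g (t, y)) = (fun t => a * (t * t) + b * t + c) by apply/funext => t; exact: E.
exact: dquad.
Qed.

Lemma pq2 (g : R * R -> R) (x y a b c : R) : (forall t, g (x, t) = a * (t * t) + b * t + c) ->
  partial2 g (x, y) = 2 * a * y + b.
Proof.
move=> E; rewrite /partial2 /=.
have -> : (fun t => g (x, t)) = (fun t => a * (t * t) + b * t + c) by apply/funext => t; exact: E.
exact: dquad.
Qed.

Lemma partial1_ext g h : (forall q, U q -> g q = h q) -> forall q, U q -> partial1 g q = partial1 h q.
Proof.
move=> gh q Uq; rewrite /partial1 !derive1E; apply/esym/near_eq_derive.
exact: near1 _ _ _ gh Uq.
Qed.

Lemma partial2_ext g h : (forall q, U q -> g q = h q) -> forall q, U q -> partial2 g q = partial2 h q.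
Proof.
move=> gh q Uq; rewrite /partial2 !derive1E; apply/esym/near_eq_derive.
exact: near2 _ _ _ gh Uq.
Qed.

Lemma partial_ext i g h : (forall q, U q -> g q = h q) -> forall q, U q -> partial i g q = partial i h q.
Proof. rewrite /partial; case: ifP => _; [exact: partial1_ext|exact: partial2_ext]. Qed.

Definition hobj : R * R -> R := fun p =>
  ((p.1 * p.2) * (p.1 * p.2)) * aa + (-2 * bb) * (p.1 * p.2) + cc.

Ltac pftac := repeat first [apply: pf_add | apply: pf_mul | exact: pf_fst | exact: pf_snd | exact: pf_inv | exact: pf_cst].

Lemma pf_hobj : pf hobj.
Proof.
rewrite /hobj; apply: pf_add; last exact: pf_cst.
apply: pf_add; apply: pf_mul; try exact: pf_cst.
- by apply: pf_mul; apply: pf_mul; [exact: pf_fst|exact: pf_snd|exact: pf_fst|exact: pf_snd].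
- by apply: pf_mul; [exact: pf_fst|exact: pf_snd].
Qed.

End P.

Lemma det22 (R : comRingType) (A : 'M[R]_2) : \det A = A 0 0 * A 1 1 - A 0 1 * A 1 0.
Proof.
rewrite (expand_det_row _ ord0) !big_ord_recl big_ord0 /cofactor !det_mx11 !mxE /=.
have l1 : lift ord0 (0 : 'I_1) = (1 : 'I_2) by apply/val_inj.
have l2 : lift (lift ord0 ord0) (0 : 'I_1) = (0 : 'I_2) by apply/val_inj.
have l3 : lift ord0 (ord0 : 'I_1) = (1 : 'I_2) by apply/val_inj.
have l4 : lift (1 : 'I_2) (0 : 'I_1) = (0 : 'I_2) by apply/val_inj.
rewrite ?l1 ?l2 ?l3 /= l4.
have -> : (0 + bump 0 0 = 1)%N by [].
rewrite add0n expr0 expr1; ring.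
Qed.
Lemma rank1 (R : fieldType) (A : 'M[R]_2) : \det A = 0 -> A 0 0 != 0 -> \rank A = 1%N.
Proof.
move=> d0 a0.
have h2 := rank_leq_row A.
have hn0 : \rank A != 0%N by rewrite mxrank_eq0; apply: contra a0 => /eqP ->; rewrite mxE.
have hn2 : \rank A != 2%N.
  apply/negP => /eqP h; have : row_free A by rewrite /row_free h.
  by rewrite row_free_unit unitmxE d0 unitr0.
by move: h2 hn0 hn2; case: (\rank A) => [|[|[|]]].
Qed.

Section P.
Variable R : realType.
Local Notation mu := (@lebesgue_measure R).
Local Notation U := (@U R).
Local Notation aa := (@aa R).
Local Notation bb := (@bb R).
Local Notation cc := (@cc R).
Local Notation hobj := (@hobj R).

Lemma objf_hobj q : U q -> objf q = hobj q.
Proof.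
move=> Uq; rewrite objf_pos ?ltW // /hobj.
ring.
Qed.
Lemma objf_C3 : Ck 3 (@objf R) U.
Proof. exact: (@Ck_ext R 3 (@objf R) hobj objf_hobj (@pf_Ck R 3 hobj (@pf_hobj R))). Qed.

Definition P1 (p : R * R) := 2 * (p.2 * p.2 * aa) * p.1 + (-2 * bb * p.2).
Definition P2 (p : R * R) := 2 * (p.1 * p.1 * aa) * p.2 + (-2 * bb * p.1).

Lemma hobj_P1 : partial1 hobj = P1.
Proof.
apply/funext => -[x y]; rewrite (@pq1 R hobj x y (y * y * aa) (-2 * bb * y) cc) //.
by move=> t; rewrite /hobj /=; ring.
Qed.
Lemma hobj_P2 : partial2 hobj = P2.
Proof.
apply/funext => -[x y]; rewrite (@pq2 R hobj x y (x * x * aa) (-2 * bb * x) cc) //.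
by move=> t; rewrite /hobj /=; ring.
Qed.
Lemma hess_objf x y : 0 < x -> hessian (@objf R) (x, y) =
  \matrix_(i < 2, j < 2) (if val i == 0%N then (if val j == 0%N then 2 * (y * y * aa) else 4 * aa * x * y - 2 * bb)
      else (if val j == 0%N then 4 * aa * x * y - 2 * bb else 2 * (x * x * aa))).
Proof.
move=> x0; apply/matrixP => i j; rewrite !mxE.
rewrite (@partial_ext R i _ (partial j hobj)); last 2 first.
- by move=> q Uq; apply: partial_ext => // r Ur; exact: objf_hobj.
- exact: x0.
rewrite /partial; case: ifP => _; case: ifP => _; rewrite ?hobj_P1 ?hobj_P2.
- rewrite (@pq1 R P1 x y 0 (2 * (y * y * aa)) (-2 * bb * y)); first ring.
  by move=> t; rewrite /P1 /=; ring.
- rewrite (@pq1 R P2 x y (2 * aa * y) (-2 * bb) 0); first ring.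
  by move=> t; rewrite /P2 /=; ring.
- rewrite (@pq2 R P1 x y (2 * aa * x) (-2 * bb) 0); first ring.
  by move=> t; rewrite /P1 /=; ring.
- rewrite (@pq2 R P2 x y 0 (2 * (x * x * aa)) (-2 * bb * x)); first ring.
  by move=> t; rewrite /P2 /=; ring.
Qed.
Let k := bb / aa.

Lemma aa_neq0 : aa != 0. Proof. exact: lt0r_neq0 (@aa_gt0 R). Qed.

Lemma objf_sq q : 0 <= q.1 -> objf q = aa * (q.1 * q.2 - k) ^+ 2 + (cc - bb * k).
Proof. move=> q0; rewrite objf_pos // /k; field; exact: aa_neq0. Qed.

Lemma objf_ge q : cc - bb * k <= objf q.
Proof.
have bk : 0 <= bb * k.
  by rewrite /k; apply: mulr_ge0; [exact: ltW (@bb_gt0 R)| apply: divr_ge0; apply: ltW; [exact: (@bb_gt0 R)|exact: (@aa_gt0 R)]].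
case: (boolP (q.1 <= 0)) => q0.
  rewrite objf_neg //; lra.
have {}q0 : 0 < q.1 by rewrite ltNge.
rewrite objf_sq; last exact: ltW.
have h : 0 <= aa * (q.1 * q.2 - k) ^+ 2 by apply: mulr_ge0; [exact: ltW (@aa_gt0 R)|exact: sqr_ge0].
lra.
Qed.

Lemma objf_min : objf (1, k) = cc - bb * k.
Proof. by rewrite objf_sq //= mul1r subrr expr0n /= mulr0 add0r. Qed.

Lemma inf_objf : inf (range (@objf R)) = cc - bb * k.
Proof.
apply/eqP; rewrite eq_le; apply/andP; split.
- rewrite -objf_min; apply: ge_inf; last by exists (1, k).
  by exists (cc - bb * k) => _ [q _ <-]; exact: objf_ge.
- apply: lb_le_inf; first by exists (objf (1, k)), (1, k).
  by move=> _ [q _ <-]; exact: objf_ge.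
Qed.

Lemma MU q : (objf q = inf (range (@objf R)) /\ U q) <-> (0 < q.1 /\ q.1 * q.2 = k).
Proof.
rewrite inf_objf; split.
- move=> [E Uq]; split => //; move: E; rewrite objf_sq ?ltW // => /eqP.
  rewrite -subr_eq0 addrK mulf_eq0 (negbTE aa_neq0) /= sqrf_eq0 subr_eq0.
  by move/eqP.
- move=> [q0 E]; split => //; rewrite objf_sq ?ltW // E subrr expr0n /= mulr0 add0r //.
Qed.
Lemma k_gt0 : 0 < k.
Proof. by rewrite /k; apply: divr_gt0; [exact: (@bb_gt0 R)|exact: (@aa_gt0 R)]. Qed.

Lemma MU_eq : [set q | objf q = inf (range (@objf R))] `&` U =
  [set q : R * R | 0 < q.1 /\ q.1 * q.2 = k].
Proof. by apply/seteqP; split => q /= /MU. Qed.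

Lemma S_sub : C1_submanifold_dim1 [set q : R * R | 0 < q.1 /\ q.1 * q.2 = k].
Proof.
move=> p [p0 pk].
exists U, U, (fun q => (q.1, q.1 * q.2 + (- k))), (fun w => (w.1, (w.2 + k) * w.1^-1)).
split.
- split; [exact: openU | split; [exact: p0 | exact: openU]].
- split; split.
  + exact: (@pf_Ck R 1 _ (@pf_fst R)).
  + apply: (@pf_Ck R 1 (fun q => q.1 * q.2 + (- k))).
    apply: pf_add; [apply: pf_mul; [exact: pf_fst|exact: pf_snd]|exact: pf_cst].
  + exact: (@pf_Ck R 1 _ (@pf_fst R)).
  + apply: (@pf_Ck R 1 (fun w => (w.2 + k) * w.1^-1)).
    apply: pf_mul; [apply: pf_add; [exact: pf_snd|exact: pf_cst]|exact: pf_inv].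
- move=> [x y] Ux; split => //=; rewrite /U /= in Ux.
  by congr pair; field; exact: lt0r_neq0.
- move=> [x y] Ux; split => //=; rewrite /U /= in Ux.
  by congr pair; field; exact: lt0r_neq0.
- move=> [x y] Ux /=; split.
  + by move=> [_ ->]; rewrite addrN.
  + move=> /eqP; rewrite addr_eq0 opprK => /eqP E; split => //.
Qed.

Lemma hess_rank q : 0 < q.1 /\ q.1 * q.2 = k -> \rank (hessian (@objf R) q) = 1%N.
Proof.
case: q => x y /= [x0 E]; rewrite hess_objf //.
have Et : aa * (x * y) = bb by rewrite E /k; field; exact: aa_neq0.
apply: rank1.
- rewrite det22 !mxE /=.
  transitivity (4 * (aa * (x * y)) ^+ 2 - (4 * (aa * (x * y)) - 2 * bb) ^+ 2); first ring.
  by rewrite Et; ring.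
- rewrite !mxE /=.
  have y0 : y != 0.
    by apply/eqP => y0; move: E; rewrite y0 mulr0 => k0; move: k_gt0; rewrite -k0 ltxx.
  have h2 : (2 : R) != 0 by apply: lt0r_neq0; lra.
  by rewrite !mulf_neq0 ?aa_neq0.
Qed.
End P.

Import measurable_realfun.

Section C.
Variable R : realType.
Local Notation mu := (@lebesgue_measure R).
Local Notation U := (@U R).

Lemma cont_lossF (th : R * R) : continuous (lossF th).
Proof.
move=> x; rewrite /lossF.
apply: (@continuousM _ _ (fun x => th.2 * Num.max (th.1 * x) 0 - sin x)
   (fun x => th.2 * Num.max (th.1 * x) 0 - sin x)).
all: apply: continuousD; [|apply: continuousN; exact: continuous_sin].
all: apply: (@continuousM _ _ (cst th.2)); first exact: cvg_cst.
all: apply: (@continuous_max _ _ (fun x => th.1 * x) (cst 0)); last exact: cvg_cst.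
all: apply: (@continuousM _ _ (cst th.1) id); [exact: cvg_cst| exact: cvg_id].
Qed.

Lemma E_loss d (Omega : measurableType d) (P : probability Omega R) (Y : Omega -> R)
  (mY : measurable_fun setT Y)
  (YU : forall A : set R, measurable A -> P (Y @^-1` A) = uniform_prob (@ltr01 R) A)
  (th : R * R) :
  ('E_P[fun w => lossF th (Y w)] = (objf th)%:E)%E.
Proof.
have mf : measurable_fun setT (fun y => (lossF th y)%:E).
  by apply/measurable_EFinP; exact: continuous_measurable_fun (cont_lossF th).
have mf' : measurable_fun (T := measurableTypeR R) setT (fun y => (lossF th y)%:E) := mf.
have mY' : measurable_fun (T:=Omega) (U:=measurableTypeR R) setT Y := mY.
rewrite unlock.
pose Ym : {mfun Omega >-> measurableTypeR R} := HB.pack (Y : Omega -> measurableTypeR R) (isMeasurableFun.Build _ _ _ _ _ mY').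
transitivity (\int[distribution P Ym]_y (lossF th y)%:E)%E.
  rewrite ge0_integral_distribution //.
  by move=> y; rewrite lee_fin sqr_ge0.
rewrite (eq_measure_integral (uniform_prob (@ltr01 R))); last first.
  by move=> A mA _; exact: (YU A mA).
rewrite integral_uniform //; last by move=> y; rewrite lee_fin sqr_ge0.
rewrite subr0 invr1 mul1e /objf /Rintegral fineK //.
apply: integrable_fin_num => //; apply: cint; exact: cont_lossF.
Qed.
Lemma E_bound d (Omega : measurableType d) (P : probability Omega R) (g : Omega -> R) (K : R) :
  measurable_fun setT g -> (forall w, 0 <= g w <= K) -> ('E_P[g] <= K%:E)%E.
Proof.
move=> mg gK; rewrite unlock.
have -> : (K%:E = \int[P]_w (cst K%:E w))%E.
  by rewrite integral_cst //= probability_setT mule1.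
apply: ge0_le_integral => //.
- by move=> w _; rewrite lee_fin; case/andP: (gK w).
- exact/measurable_EFinP.
- by move=> w _; rewrite lee_fin; case/andP: (gK w).
Qed.

Definition hx (x : R) (p : R * R) : R := (p.1 * p.2 * x - sin x) ^+ 2.

Lemma loss_hx x p : 0 <= x -> U p -> lossF p x = hx x p.
Proof.
move=> x0 Up; rewrite /lossF /hx max_l; last by apply: mulr_ge0 => //; apply: ltW.
by congr (_ ^+ 2); ring.
Qed.

Definition Gx (p : R * R) (x : R) : R :=
  let u := p.1 * p.2 * x - sin x in
  (u ^+ 2) ^+ 2 + ((2 * (p.2 * x) * u) ^+ 2 + (2 * (p.1 * x) * u) ^+ 2).

Lemma grad_eq x p : 0 <= x -> U p ->
  lossF p x ^+ 2 + grad_sqnorm (fun th => lossF th x) p = Gx p x.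
Proof.
case: p => p1 p2 x0 Up; rewrite /grad_sqnorm.
rewrite (@partial1_ext R _ (hx x)); last 2 first.
- by move=> q Uq; exact: loss_hx.
- exact: Up.
rewrite (@partial2_ext R _ (hx x)); last 2 first.
- by move=> q Uq; exact: loss_hx.
- exact: Up.
rewrite (@pq1 R (hx x) p1 p2 ((p2 * x) * (p2 * x)) (-2 * sin x * (p2 * x)) (sin x ^+ 2)); last first.
  by move=> t; rewrite /hx /=; ring.
rewrite (@pq2 R (hx x) p1 p2 ((p1 * x) * (p1 * x)) (-2 * sin x * (p1 * x)) (sin x ^+ 2)); last first.
  by move=> t; rewrite /hx /=; ring.
by rewrite (@loss_hx x _ x0 Up) /hx /Gx /=; ring.
Qed.

Lemma cN {f : R -> R} : continuous f -> continuous (fun x => - f x).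
Proof. by move=> cf x; apply: continuousN; exact: cf. Qed.

Lemma cont_Gx p : continuous (Gx p).
Proof.
rewrite /Gx /=.
repeat first [apply: cD | apply: cM | apply: c_sq | apply: cN | exact: c_id | exact: c_cst | exact: continuous_sin].
Qed.

Lemma sq_le (z c : R) : `|z| <= c -> z ^+ 2 <= c ^+ 2.
Proof. by rewrite ler_norml => /andP[h1 h2]; rewrite !expr2; nra. Qed.

Lemma Gx_bound (B : R) p x : 0 <= B -> `|p.1| <= B -> `|p.2| <= B -> 0 <= x <= 1 ->
  0 <= Gx p x <= ((B * B + 1) ^+ 2) ^+ 2 + 8 * (B ^+ 2 * (B * B + 1) ^+ 2).
Proof.
case: p => p1 p2 B0 /= h1 h2 /andP[x0 x1].
set c := B * B + 1.
set u := p1 * p2 * x - sin x.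
have hx : `|x| <= 1 by rewrite ger0_norm.
have hs := sin_max x.
have hp : `|p1 * p2 * x| <= B * B.
  rewrite !normrM; have n1 := normr_ge0 p1; have n2 := normr_ge0 p2; have n3 := normr_ge0 x.
  have n12 : `|p1| * `|p2| <= B * B by apply: ler_pM.
  have n12' : 0 <= `|p1| * `|p2| by apply: mulr_ge0.
  nra.
have hu : `|u| <= c.
  by apply: (le_trans (ler_normB _ _)); rewrite /c; apply: lerD.
have hu2 : u ^+ 2 <= c ^+ 2.
  by apply: sq_le.
have ha (a : R) : `|a| <= B -> (a * x) ^+ 2 <= B ^+ 2.
  move=> ha; apply: sq_le; rewrite normrM -[B]mulr1.
  by apply: ler_pM; rewrite ?normr_ge0.
have u2 : 0 <= u ^+ 2 := sqr_ge0 u.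
have E : Gx (p1, p2) x = (u ^+ 2) ^+ 2 + 4 * ((p2 * x) ^+ 2 * u ^+ 2) + 4 * ((p1 * x) ^+ 2 * u ^+ 2).
  by rewrite /Gx /= -/u; ring.
rewrite E; apply/andP; split.
  by apply: addr_ge0; [apply: addr_ge0|]; rewrite ?sqr_ge0 // mulr_ge0 // mulr_ge0 // sqr_ge0.
have k1 : (u ^+ 2) ^+ 2 <= (c ^+ 2) ^+ 2 by apply: lerXn2r; rewrite ?nnegrE ?sqr_ge0.
have k2 : (p2 * x) ^+ 2 * u ^+ 2 <= B ^+ 2 * c ^+ 2 by apply: ler_pM; rewrite ?sqr_ge0 // ha.
have k3 : (p1 * x) ^+ 2 * u ^+ 2 <= B ^+ 2 * c ^+ 2 by apply: ler_pM; rewrite ?sqr_ge0 // ha.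
lra.
Qed.
Lemma max0_norm (a : R) : `|Num.max a 0| <= `|a|.
Proof. by rewrite maxEle; case: ifP => _; rewrite ?normr0 ?normr_ge0. Qed.

Lemma max0_lip (a b : R) : `|Num.max a 0 - Num.max b 0| <= `|a - b|.
Proof.
case: (lerP a 0) => ha; case: (lerP b 0) => hb.
- by rewrite subrr normr0 normr_ge0.
- rewrite sub0r normrN (gtr0_norm hb) (ltr0_norm); lra.
- rewrite subr0 (gtr0_norm ha) (gtr0_norm); lra.
- by [].
Qed.

Lemma v_le (th : R * R) x : `|x| <= 1 ->
  `|th.2 * Num.max (th.1 * x) 0 - sin x| <= `|th.1| * `|th.2| + 1.
Proof.
move=> hx; apply: (le_trans (ler_normB _ _)); apply: lerD; last exact: sin_max.
rewrite normrM mulrC; apply: ler_pM; rewrite ?normr_ge0 //.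
apply: (le_trans (max0_norm _)); rewrite normrM -[X in _ <= X]mulr1.
by apply: ler_pM; rewrite ?normr_ge0.
Qed.

Lemma lossF_le (th : R * R) x : `|x| <= 1 -> 0 <= lossF th x <= (`|th.1| * `|th.2| + 1) ^+ 2.
Proof. by move=> hx; rewrite /lossF sqr_ge0 /=; apply: sq_le; exact: v_le. Qed.

Lemma E_loss2 d (Omega : measurableType d) (P : probability Omega R) (Y : Omega -> R)
  (mY : measurable_fun setT Y) (Y01 : forall w, 0 <= Y w <= 1) (th : R * R) :
  ('E_P[fun w => (lossF th (Y w) ^+ 2)%R] < +oo)%E.
Proof.
set c := (`|th.1| * `|th.2| + 1) ^+ 2.
apply: (@le_lt_trans _ _ ((c ^+ 2)%:E)); last exact: ltry.
apply: E_bound.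
  have -> : (fun w => lossF th (Y w) ^+ 2) = (fun x => lossF th x ^+ 2) \o Y by [].
  apply: measurableT_comp mY; apply: continuous_measurable_fun.
  exact: c_sq (cont_lossF th).
move=> w; rewrite sqr_ge0 /=; apply: sq_le.
have hx : `|Y w| <= 1 by case/andP: (Y01 w) => h1 h2; rewrite ger0_norm.
by case/andP: (@lossF_le th (Y w) hx) => h1 h2; rewrite ger0_norm.
Qed.

Lemma sup_fin d (Omega : measurableType d) (P : probability Omega R) (Y : Omega -> R)
  (mY : measurable_fun setT Y) (Y01 : forall w, 0 <= Y w <= 1) (C : set (R * R)) :
  compact C -> C `<=` U ->
  (ereal_sup [set 'E_P[fun w => (lossF theta (Y w) ^+ 2 +
                          grad_sqnorm (fun th => lossF th (Y w)) theta)%R]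
                         | theta in C] < +oo)%E.
Proof.
move=> cC CU.
have /compact_bounded [M [_ HM]] := cC.
set B := `|M| + 1.
have B0 : 0 <= B by rewrite /B; have := normr_ge0 M; lra.
have HB th : C th -> `|th.1| <= B /\ `|th.2| <= B.
  move=> Cth; have : M < B by rewrite /B; have := ler_norm M; lra.
  move=> /HM /(_ th Cth) /=; rewrite prod_normE maxEle; case: ifP => h hB; split => //; lra.
apply: (@le_lt_trans _ _ ((((B * B + 1) ^+ 2) ^+ 2 + 8 * (B ^+ 2 * (B * B + 1) ^+ 2))%:E)); last exact: ltry.
apply: ge_ereal_sup => _ [th Cth <-].
have -> : (fun w => lossF th (Y w) ^+ 2 + grad_sqnorm (fun th0 => lossF th0 (Y w)) th) = (fun w => Gx th (Y w)).
  apply/funext => w; apply: grad_eq; last exact: CU.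
  by case/andP: (Y01 w).
apply: E_bound.
  have -> : (fun w => Gx th (Y w)) = (Gx th) \o Y by [].
  apply: measurableT_comp mY; apply: continuous_measurable_fun.
  exact: cont_Gx.
move=> w; have [h1 h2] := HB th Cth; exact: Gx_bound.
Qed.
Lemma dist2_ge1 (a b : R * R) : `|a.1 - b.1| <= dist2 a b.
Proof.
rewrite /dist2 -(sqrtr_sqr (a.1 - b.1)); apply: ler_wsqrtr; rewrite lerDl; exact: sqr_ge0.
Qed.
Lemma dist2_ge2 (a b : R * R) : `|a.2 - b.2| <= dist2 a b.
Proof.
rewrite /dist2 -(sqrtr_sqr (a.2 - b.2)); apply: ler_wsqrtr; rewrite lerDr; exact: sqr_ge0.
Qed.

Lemma loc_lip (x : R) : 0 <= x <= 1 -> locally_lipschitz (fun th => lossF th x).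
Proof.
case/andP=> x0 x1 p.
have hx : `|x| <= 1 by rewrite ger0_norm.
set B := `|p.1| + `|p.2| + 1.
have B0 : 0 <= B by rewrite /B; have := normr_ge0 p.1; have := normr_ge0 p.2; lra.
have bnd (a : R * R) : dist2 a p < 1 -> `|a.1| <= B /\ `|a.2| <= B.
  move=> ha; have h1 := dist2_ge1 a p; have h2 := dist2_ge2 a p.
  have := ler_normD (a.1 - p.1) p.1; have := ler_normD (a.2 - p.2) p.2.
  rewrite !subrK /B => e2 e1.
  have := normr_ge0 p.1; have := normr_ge0 p.2; split; lra.
exists 1 => //; exists ((B * B + 1) *+ 2 * (B *+ 2)) => a b ha hb.
have [a1 a2] := bnd a ha; have [b1 b2] := bnd b hb.
set va := a.2 * Num.max (a.1 * x) 0 - sin x.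
set vb := b.2 * Num.max (b.1 * x) 0 - sin x.
have hva : `|va| <= B * B + 1.
  apply: (le_trans (@v_le a x hx)); apply: lerD => //; apply: ler_pM; rewrite ?normr_ge0 //.
have hvb : `|vb| <= B * B + 1.
  apply: (le_trans (@v_le b x hx)); apply: lerD => //; apply: ler_pM; rewrite ?normr_ge0 //.
have hs : `|va + vb| <= (B * B + 1) *+ 2.
  by apply: (le_trans (ler_normD _ _)); rewrite mulr2n; apply: lerD.
have hd : `|va - vb| <= B *+ 2 * dist2 a b.
  have -> : va - vb = a.2 * (Num.max (a.1 * x) 0 - Num.max (b.1 * x) 0) + Num.max (b.1 * x) 0 * (a.2 - b.2).
    by rewrite /va /vb; ring.
  apply: (le_trans (ler_normD _ _)); rewrite mulr2n mulrDl.
  apply: lerD; rewrite normrM.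
  - apply: ler_pM; rewrite ?normr_ge0 //.
    apply: (le_trans (max0_lip _ _)); rewrite -mulrBl normrM.
    apply: (le_trans _ (dist2_ge1 a b)); rewrite -[X in _ <= X]mulr1.
    by apply: ler_pM; rewrite ?normr_ge0.
  - apply: ler_pM; rewrite ?normr_ge0 //; last exact: dist2_ge2.
    apply: (le_trans (max0_norm _)); rewrite normrM -[X in _ <= X]mulr1.
    by apply: ler_pM; rewrite ?normr_ge0.
rewrite /lossF -/va -/vb subr_sqr normrM.
have -> : (B * B + 1) *+ 2 * (B *+ 2) * dist2 a b = (B *+ 2 * dist2 a b) * ((B * B + 1) *+ 2) by ring.
have dge : 0 <= dist2 a b by rewrite /dist2 sqrtr_ge0.
apply: ler_pM; rewrite ?normr_ge0 //.
Qed.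
End C.


Theorem proposition7p2 (R : realType) (d : measure_display)
  (Omega : measurableType d) (P : probability Omega R)
  (X : nat -> nat -> Omega -> R) :
  (forall n m, measurable_fun setT (X n m)) ->
  (forall n m w, 0 <= X n m w <= 1) ->
  (forall n m (A : set R), measurable A ->
     P (X n m @^-1` A) = uniform_prob (@ltr01 R) A) ->
  mutually_independent P (fun nm : nat * nat => X nm.1 nm.2) ->
  let M := [set theta : R * R | objf theta = inf (range (@objf R))] in
  [/\ forall theta : R * R,
        ('E_P[fun w => lossF theta (X 1%N 1%N w)] = (objf theta)%:E)%E /\
        ('E_P[fun w => ((lossF theta (X 1%N 1%N w)) ^+ 2)%R] < +oo)%E,
      forall x : R, 0 <= x <= 1 -> locally_lipschitz (fun theta => lossF theta x) &
      exists U : set (R * R),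
        [/\ open U,
            Ck 3 (@objf R) U,
            forall C : set (R * R), C !=set0 -> compact C -> C `<=` U ->
              (ereal_sup [set 'E_P[fun w => (lossF theta (X 1%N 1%N w) ^+ 2 +
                          grad_sqnorm (fun th => lossF th (X 1%N 1%N w)) theta)%R]
                         | theta in C] < +oo)%E,
            M `&` U !=set0 /\ C1_submanifold_dim1 (M `&` U) &
            forall theta, (M `&` U) theta -> \rank (hessian (@objf R) theta) = 1%N]].
Proof.
move=> mX X01 XU _ M.
have ME : M `&` U R = [set q : R * R | 0 < q.1 /\ q.1 * q.2 = bb R / aa R].
  exact: MU_eq.
split.
- move=> th; split.
  + by apply: E_loss; [exact: mX | exact: XU].
  + by apply: E_loss2; [exact: mX | exact: X01].
- move=> x hx; exact: loc_lip.
- exists (U R); split.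
  + exact: openU.
  + exact: objf_C3.
  + by move=> C _ cC CU; apply: sup_fin; [exact: mX | exact: X01 | exact: cC | exact: CU].
  + rewrite ME; split; last exact: S_sub.
    by exists (1, bb R / aa R); split => //=; rewrite mul1r.
  + by move=> th; rewrite ME => h; apply: hess_rank.
Qed.
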